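(* The cellular automaton $F$ on the free group $G$ with generators $a,b$ and alphabet $A=\{0,1,\iota,\beta\}$ described in the context is not sensitive to initial conditions.
   Context: $G$ is the free group on $\{a,b\}$ with generating set $E=\{a,a^{-1},b,b^{-1}\}$, word norm $\|g\|$, and Cantor metric $d(x,y)=2^{-k}$, $k=\min\{\|g\|:x_g\neq y_g\}$, on $A^G$, with closed balls $B$. In a configuration $c\in A^G$, a position $g$ is free if $c_g\in\{0,1\}$ and $|\{g'\in gE: c_{g'}\in\{0,1\}\}|\geq 2$. A position $g$ is blocked in $c$ if either ($c_g=\iota$ and $c_{g'}\in\{\iota,\beta\}$ for all $g'\in gE$), or ($c_g=\beta$ and exactly one $g'\in gE$ has $c_{g'}=\iota$ and all other elements of $gE$ are free in $c$). The map $F:A^G\to A^G$ is defined by: $F(c)_g=c_g+\sum_{g'\in gE,\,c_{g'}\in\{0,1\}}c_{g'}\bmod 2$ if $c_g\in\{0,1\}$; $F(c)_g=c_g$ if $g$ is blocked in $c$; $F(c)_g=0$ otherwise. (It is a cellular automaton of radius 2.) $F$ is sensitive to initial conditions if $\exists\epsilon>0\,\forall x\,\forall\delta>0\,\exists t\in\mathbb{N}\,\exists y\in B(x,\delta)$ with $F^t(y)\notin B(F^t(x),\epsilon)$. *)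

(* Defs.v *)
From Stdlib Require Import Reals Lra List Bool Arith ClassicalEpsilon.
Import ListNotations.
Open Scope R_scope.

Inductive gen := ga | gai | gb | gbi.

Definition gen_eqb (x y : gen) : bool :=
  match x, y with
  | ga, ga | gai, gai | gb, gb | gbi, gbi => true
  | _, _ => false
  end.

Definition ginv (x : gen) : gen :=
  match x with ga => gai | gai => ga | gb => gbi | gbi => gb end.

Definition E : list gen := [ga; gai; gb; gbi].

(* Reduced words, stored in REVERSE order: the head is the LAST letter.
   Reducedness: no two adjacent letters are mutually inverse. *)
Fixpoint reduced (w : list gen) : bool :=
  match w with
  | x :: ((y :: _) as t) => negb (gen_eqb x (ginv y)) && reduced t
  | _ => true
  end.

Definition G := { w : list gen | reduced w = true }.

Definition gnorm (g : G) : nat := length (proj1_sig g).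

Definition mulgen_w (w : list gen) (e : gen) : list gen :=
  match w with
  | e' :: w' => if gen_eqb e' (ginv e) then w' else e :: w
  | [] => [e]
  end.

Lemma gen_eqb_eq x y : gen_eqb x y = true <-> x = y.
Proof. destruct x, y; simpl; split; congruence. Qed.

Lemma mulgen_reduced w e : reduced w = true -> reduced (mulgen_w w e) = true.
Proof.
  destruct w as [|e' w']; simpl; [reflexivity|].
  destruct (gen_eqb e' (ginv e)) eqn:He.
  - destruct w' as [|y t]; [reflexivity|].
    intros H; apply andb_prop in H; tauto.
  - intros H. simpl. rewrite H, andb_true_r.
    destruct e, e'; simpl in *; try reflexivity; discriminate.
Qed.

Definition mulgen (g : G) (e : gen) : G :=
  exist _ (mulgen_w (proj1_sig g) e) (mulgen_reduced _ e (proj2_sig g)).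

Inductive A := A0 | A1 | Aiota | Abeta.

Definition config := G -> A.

Definition is_bit (s : A) : bool :=
  match s with A0 | A1 => true | _ => false end.

Definition bitval (s : A) : bool :=
  match s with A1 => true | _ => false end.

Definition is_iota (s : A) : bool := match s with Aiota => true | _ => false end.
Definition is_beta (s : A) : bool := match s with Abeta => true | _ => false end.

(* Number of g' in gE with c_{g'} in {0,1}.  The four elements g e (e in E)
   are pairwise distinct in the free group, so counting over E is counting
   over the set gE. *)
Definition nbits_nbr (c : config) (g : G) : nat :=
  length (filter (fun e => is_bit (c (mulgen g e))) E).

Definition freeb (c : config) (g : G) : bool :=
  is_bit (c g) && Nat.leb 2 (nbits_nbr c g).

Definition blockedb (c : config) (g : G) : bool :=
  (is_iota (c g) &&
     forallb (fun e => is_iota (c (mulgen g e)) || is_beta (c (mulgen g e))) E)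
  ||
  (is_beta (c g) &&
     existsb (fun e =>
       is_iota (c (mulgen g e)) &&
       forallb (fun e' => gen_eqb e' e || freeb c (mulgen g e')) E) E &&
     Nat.eqb (length (filter (fun e => is_iota (c (mulgen g e))) E)) 1).

Definition F (c : config) : config := fun g =>
  if is_bit (c g) then
    (if fold_left xorb
          (map (fun e => if is_bit (c (mulgen g e)) then bitval (c (mulgen g e)) else false) E)
          (bitval (c g))
     then A1 else A0)
  else if blockedb c g then c g
  else A0.

Definition differ_at (x y : config) (k : nat) : Prop :=
  exists g : G, gnorm g = k /\ x g <> y g.

Definition min_differ (x y : config) : nat :=
  epsilon (inhabits 0%nat)
    (fun k => differ_at x y k /\ forall m, differ_at x y m -> (k <= m)%nat).

Definition cdist (x y : config) : R :=
  if excluded_middle_informative (exists g : G, x g <> y g)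
  then (/ 2) ^ (min_differ x y) else 0.

Definition cball (x : config) (r : R) : config -> Prop := fun y => cdist x y <= r.

Definition sensitive (f : config -> config) : Prop :=
  exists eps : R, eps > 0 /\
    forall x : config, forall delta : R, delta > 0 ->
      exists t : nat, exists y : config,
        cball x delta y /\ ~ cball (Nat.iter t f x) eps (Nat.iter t f y).

(* Main.v *)
Require Import Defs.
From Stdlib Require Import Reals Lra Lia List Bool Arith ClassicalEpsilon Classical.
Import ListNotations.
Open Scope R_scope.

Lemma least_exists (P : nat -> Prop) : forall n, P n ->
  exists k, P k /\ forall m, P m -> (k <= m)%nat.
Proof.
  intro n; induction n as [n IH] using lt_wf_ind; intro Hn.
  destruct (classic (exists m, (m < n)%nat /\ P m)) as [[m [Hm Pm]]|Hno].
  - exact (IH m Hm Pm).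
  - exists n; split; [exact Hn|]. intros m Pm.
    destruct (le_lt_dec n m) as [|Hlt]; [assumption|].
    exfalso; apply Hno; eauto.
Qed.

Lemma min_differ_spec x y : (exists g, x g <> y g) ->
  differ_at x y (min_differ x y) /\ forall m, differ_at x y m -> (min_differ x y <= m)%nat.
Proof.
  intros [g Hg]. unfold min_differ. apply epsilon_spec.
  apply (least_exists _ (gnorm g)). exists g; auto.
Qed.

Lemma half_pow n : (/2)^n = / (2^n).
Proof. apply pow_inv. Qed.

Lemma pow2_pos n : 0 < 2^n.
Proof. apply pow_lt; lra. Qed.

Lemma half_le m K : (K <= m)%nat -> (/2)^m <= (/2)^K.
Proof.
  intro H. rewrite !half_pow. apply Rinv_le_contravar; [apply pow2_pos|].
  apply Rle_pow; [lra|exact H].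
Qed.

Lemma half_lt m K : (m < K)%nat -> (/2)^K < (/2)^m.
Proof.
  intro H. rewrite !half_pow. apply Rinv_lt_contravar.
  - apply Rmult_lt_0_compat; apply pow2_pos.
  - apply Rlt_pow; [lra|exact H].
Qed.

Lemma cdist_le_of_agree x y K :
  (forall g, (gnorm g < K)%nat -> x g = y g) -> cdist x y <= (/2)^K.
Proof.
  intro H. unfold cdist.
  destruct (excluded_middle_informative (exists g, x g <> y g)) as [Hex|].
  - destruct (min_differ_spec x y Hex) as [[g [Hg Hd]] _].
    apply half_le. destruct (le_lt_dec K (min_differ x y)) as [|Hlt]; [assumption|].
    exfalso. apply Hd, H. lia.
  - left. rewrite half_pow. apply Rinv_0_lt_compat, pow2_pos.
Qed.

Lemma agree_of_cdist_le x y K :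
  cdist x y <= (/2)^K -> forall g, (gnorm g < K)%nat -> x g = y g.
Proof.
  intros H g Hg. destruct (classic (x g = y g)) as [|Hne]; [assumption|].
  exfalso. unfold cdist in H.
  destruct (excluded_middle_informative (exists g, x g <> y g)) as [Hex|Hn].
  - destruct (min_differ_spec x y Hex) as [_ Hmin].
    assert (Hm : (min_differ x y <= gnorm g)%nat) by (apply Hmin; exists g; auto).
    pose proof (half_lt (min_differ x y) K ltac:(lia)). lra.
  - apply Hn; eauto.
Qed.

Lemma ginv_inv e : ginv (ginv e) = e.
Proof. destruct e; reflexivity. Qed.

Lemma gen_eqb_false x y : gen_eqb x y = false -> x <> y.
Proof. intros H E'; subst; destruct y; discriminate. Qed.

Lemma mul_up g f e' w' : proj1_sig g = e' :: w' -> e' <> ginv f ->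
  proj1_sig (mulgen g f) = f :: e' :: w'.
Proof.
  intros Hg Hne. unfold mulgen; simpl. rewrite Hg; simpl.
  destruct (gen_eqb e' (ginv f)) eqn:E1; [apply gen_eqb_eq in E1; contradiction|reflexivity].
Qed.

Lemma mul_down g f e' w' : proj1_sig g = e' :: w' -> e' = ginv f ->
  proj1_sig (mulgen g f) = w'.
Proof.
  intros Hg He. unfold mulgen; simpl. rewrite Hg; simpl.
  destruct (gen_eqb e' (ginv f)) eqn:E1; [reflexivity|].
  apply gen_eqb_false in E1; contradiction.
Qed.

Lemma norm_bound g e : (gnorm (mulgen g e) <= S (gnorm g))%nat.
Proof.
  unfold gnorm, mulgen; simpl. destruct (proj1_sig g) as [|e' w']; simpl; [lia|].
  destruct (gen_eqb e' (ginv e)); simpl; lia.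
Qed.

Lemma nbits_ge c k f :
  (forall h, h <> ginv f -> is_bit (c (mulgen k h)) = true) -> (2 <= nbits_nbr c k)%nat.
Proof.
  intro H. unfold nbits_nbr, E. cbn [filter].
  destruct f; simpl ginv in H;
  try (rewrite (H ga) by (intro Hc; inversion Hc));
  try (rewrite (H gai) by (intro Hc; inversion Hc));
  try (rewrite (H gb) by (intro Hc; inversion Hc));
  try (rewrite (H gbi) by (intro Hc; inversion Hc));
  match goal with |- context [is_bit ?t] => destruct (is_bit t) end; simpl; lia.
Qed.

Lemma niota_one c g f :
  (forall h, h <> f -> is_iota (c (mulgen g h)) = false) -> is_iota (c (mulgen g f)) = true ->
  length (filter (fun e => is_iota (c (mulgen g e))) E) = 1%nat.
Proof.
  intros H Hf. unfold E. cbn [filter].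
  destruct f; rewrite Hf;
  try (rewrite (H ga) by (intro Hc; inversion Hc));
  try (rewrite (H gai) by (intro Hc; inversion Hc));
  try (rewrite (H gb) by (intro Hc; inversion Hc));
  try (rewrite (H gbi) by (intro Hc; inversion Hc)); reflexivity.
Qed.

Definition Inv (N : nat) (c : config) : Prop := forall g,
  ((gnorm g <= N)%nat -> c g = Aiota) /\ (gnorm g = S N -> c g = Abeta) /\
  ((S (S N) <= gnorm g <= S (S (S N)))%nat -> is_bit (c g) = true).

Lemma F_bit c g : is_bit (c g) = true -> is_bit (F c g) = true.
Proof. intro H. unfold F. rewrite H. destruct (fold_left _ _ _); reflexivity. Qed.

Lemma Inv_F N c : Inv N c -> Inv N (F c).
Proof.
  intros HI g. split; [|split].
  - intro Hg. destruct (HI g) as [Hi _]. specialize (Hi Hg).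
    unfold F. rewrite Hi. cbn [is_bit].
    assert (Hb : blockedb c g = true).
    { unfold blockedb. rewrite Hi. apply orb_true_intro; left.
      apply andb_true_intro; split; [reflexivity|].
      apply forallb_forall. intros e _.
      pose proof (norm_bound g e).
      destruct (HI (mulgen g e)) as [H1 [H2 _]].
      destruct (le_lt_dec (gnorm (mulgen g e)) N).
      - rewrite H1 by assumption; reflexivity.
      - rewrite H2 by lia; reflexivity. }
    rewrite Hb; reflexivity.
  - intro Hg. destruct (HI g) as [_ [Hb _]]. specialize (Hb Hg).
    unfold F. rewrite Hb. cbn [is_bit].
    destruct (proj1_sig g) as [|e' w'] eqn:Hsig.
    { unfold gnorm in Hg; rewrite Hsig in Hg; discriminate. }
    assert (Hlw : length w' = N) by (unfold gnorm in Hg; rewrite Hsig in Hg; simpl in Hg; lia).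
    assert (Hdown : c (mulgen g (ginv e')) = Aiota).
    { apply (HI _). unfold gnorm. rewrite (mul_down g (ginv e') e' w' Hsig (eq_sym (ginv_inv e'))). lia. }
    assert (Hup : forall f, f <> ginv e' -> proj1_sig (mulgen g f) = f :: e' :: w').
    { intros f Hf. apply (mul_up g f e' w' Hsig). intro Hc; apply Hf; rewrite Hc, ginv_inv; reflexivity. }
    assert (Hupbit : forall f, f <> ginv e' -> is_bit (c (mulgen g f)) = true).
    { intros f Hf. apply (HI _). unfold gnorm. rewrite (Hup f Hf). simpl. lia. }
    assert (Hbl : blockedb c g = true).
    { unfold blockedb. rewrite Hb. apply orb_true_intro; right.
      apply andb_true_intro; split; [apply andb_true_intro; split; [reflexivity|apply existsb_exists; exists (ginv e'); split]|].
      - destruct e'; simpl; tauto.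
      - rewrite Hdown. apply andb_true_intro; split; [reflexivity|]. apply forallb_forall. intros f _.
        destruct (gen_eqb f (ginv e')) eqn:Ef; [reflexivity|]. simpl.
        apply gen_eqb_false in Ef.
        unfold freeb. rewrite (Hupbit f Ef). cbn [andb].
        apply Nat.leb_le. apply (nbits_ge c (mulgen g f) f).
        intros h Hh. apply (HI _). unfold gnorm.
        rewrite (mul_up (mulgen g f) h f (e' :: w') (Hup f Ef)) by (intro Hc; apply Hh; rewrite Hc, ginv_inv; reflexivity). simpl. lia.
      - apply Nat.eqb_eq. apply (niota_one c g (ginv e')); [|rewrite Hdown; reflexivity].
        intros h Hh. pose proof (Hupbit h Hh). destruct (c (mulgen g h)); try reflexivity; discriminate. }
    rewrite Hbl. reflexivity.
  - intro Hg. apply F_bit. apply (HI g). exact Hg.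
Qed.

Lemma Inv_iter N c t : Inv N c -> Inv N (Nat.iter t F c).
Proof. intro H. induction t; simpl; [exact H|apply Inv_F; exact IHt]. Qed.

Lemma Inv_agree N c d : Inv N c -> Inv N d ->
  forall g, (gnorm g < S (S N))%nat -> c g = d g.
Proof.
  intros Hc Hd g Hg. destruct (le_lt_dec (gnorm g) N).
  - rewrite (proj1 (Hc g)), (proj1 (Hd g)) by assumption; reflexivity.
  - rewrite (proj1 (proj2 (Hc g))), (proj1 (proj2 (Hd g))) by lia; reflexivity.
Qed.

Definition x0 (N : nat) : config := fun g =>
  if Nat.leb (gnorm g) N then Aiota else if Nat.eqb (gnorm g) (S N) then Abeta else A0.

Lemma Inv_x0_like N y : (forall g, (gnorm g < S (S (S (S N))))%nat -> x0 N g = y g) -> Inv N y.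
Proof.
  intros H g. unfold x0 in H. split; [|split]; intro Hg; rewrite <- H by lia.
  - apply Nat.leb_le in Hg. rewrite Hg. reflexivity.
  - rewrite Hg. rewrite (proj2 (Nat.leb_gt (S N) N)) by lia. rewrite Nat.eqb_refl. reflexivity.
  - rewrite (proj2 (Nat.leb_gt (gnorm g) N)) by lia.
    destruct (Nat.eqb_spec (gnorm g) (S N)); [lia|reflexivity].
Qed.

Theorem lemma7 : ~ sensitive F.
Proof.
  intros [eps [Heps Hs]].
  destruct (pow_lt_1_zero (/2) ltac:(rewrite Rabs_pos_eq; lra) eps Heps) as [N HN].
  destruct (Hs (x0 N) ((/2)^(S (S (S (S N))))) ltac:(apply pow_lt; lra)) as [t [y [Hy Hn]]].
  apply Hn. unfold cball.
  assert (Ix : Inv N (x0 N)) by (apply Inv_x0_like; auto).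
  assert (Iy : Inv N y).
  { apply Inv_x0_like. apply agree_of_cdist_le. exact Hy. }
  apply Rle_trans with ((/2)^(S (S N))).
  - apply cdist_le_of_agree. apply Inv_agree; apply Inv_iter; assumption.
  - specialize (HN (S (S N)) ltac:(lia)). rewrite Rabs_pos_eq in HN; [lra|].
    apply pow_le; lra.
Qed.
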